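(* Let $G$ be a finite group, $p\neq q$ odd primes, $P$ a $p$-subgroup and $Q_1\le Q$ $q$-subgroups of $G$. Assume $P$ normalizes $Q_1$ and $Q$ normalizes $Q_1P$. Then $QP$ is a subgroup of $G$ with $Q$ a Sylow $q$-subgroup and $P$ a Sylow $p$-subgroup of $QP$, and $Q_1P\trianglelefteq QP$, $Q_1\trianglelefteq QP$. Moreover $Q=[Q_1,P]\,N_Q(P)$, where $[Q_1,P]\trianglelefteq QP$ and $[Q_1,P]\cap N_Q(P)=C_{[Q_1,P]}(P)\le\Phi([Q_1,P])$.
   Context: $\Phi(X)$ is the Frattini subgroup of $X$; $[Q_1,P]$ is the commutator subgroup. *)

(* Defs.v *)
From mathcomp Require Import all_boot all_fingroup all_solvable.

(* Main.v *)
Require Import Defs.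
From mathcomp Require Import all_boot all_fingroup all_solvable.
Set Implicit Arguments.
Unset Strict Implicit.
Unset Printing Implicit Defensive.
Import GroupScope.
Local Open Scope group_scope.

Section Aux.
Variable gT : finGroupType.
Implicit Types A G H : {group gT}.

Lemma cent_prod A G : A \subset 'N(G) -> coprime #|G| #|A| -> solvable G ->
  [~: G, A] * 'C_G(A) = G.
Proof.
move=> nGA coGA solG.
have sHG : [~: G, A] \subset G by rewrite commg_subl.
have nHA : A \subset 'N([~: G, A]) by apply: commg_normr.
have nHG : G \subset 'N([~: G, A]) by apply: commg_norml.
have E := coprime_quotient_cent sHG nHA coGA solG.
have cGA : G / [~: G, A] \subset 'C(A / [~: G, A]) by apply: quotient_cents2r.
apply/eqP; rewrite eqEsubset mulG_subG sHG subsetIl /=.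
rewrite -quotientSK //= E; apply/subsetP=> x Gx; rewrite inE Gx.
exact: (subsetP cGA).
Qed.

Lemma comm_id A G : A \subset 'N(G) -> coprime #|G| #|A| -> solvable G ->
  [~: G, A, A] = [~: G, A].
Proof.
move=> nGA coGA solG.
have nKA : A \subset 'N([~: G, A]) by apply: commg_normr.
apply/eqP; rewrite eqEsubset commg_subl nKA /=.
rewrite gen_subG; apply/subsetP=> _ /imset2P[x a Gx Aa ->].
rewrite -(cent_prod nGA coGA solG) in Gx.
have /mulsgP[k c Kk Cc ->] := Gx.
have [Gc cAc] : c \in G /\ c \in 'C(A) by apply/setIP.
rewrite commMgJ.
have -> : [~ c, a] = 1 by apply/eqP/commgP; apply: (centP cAc).
rewrite mulg1 memJ_norm ?mem_commg //.
have nLc : 'C_G(A) \subset 'N([~: [~: G, A], A]).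
  apply: normsR; last by apply: cents_norm; apply: subsetIr.
  by apply: subset_trans (subsetIl _ _) (commg_norml G A).
exact: (subsetP nLc).
Qed.

End Aux.
Lemma cent_Phi (gT : finGroupType) (p : nat) (A K : {group gT}) : p.-group K -> A \subset 'N(K) ->
  coprime #|K| #|A| -> [~: K, A] = K -> 'C_K(A) \subset 'Phi(K).
Proof.
move=> pK nKA coKA defK.
have nFA : A \subset 'N('Phi(K)) := char_norm_trans (Phi_char K) nKA.
have nFK : K \subset 'N('Phi(K)) := normal_norm (Phi_normal K).
rewrite -quotient_sub1; last by apply: subset_trans (subsetIl _ _) nFK.
rewrite coprime_quotient_cent ?Phi_sub ?(pgroup_sol pK) //.
have abKF : abelian (K / 'Phi(K)) := abelem_abelian (Phi_quotient_abelem pK).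
have := coprime_abel_cent_TI (morphim_norms _ nKA) (coprime_morph _ coKA) abKF.
by rewrite -quotientR // defK => ->.
Qed.
Theorem lemma5p3 (gT : finGroupType) (p q : nat) (P Q1 Q : {group gT}) :
  prime p -> prime q -> odd p -> odd q -> p != q ->
  p.-group P -> q.-group Q1 -> q.-group Q -> Q1 \subset Q ->
  P \subset 'N(Q1) -> Q \subset 'N(Q1 * P) ->
  [/\ group_set (Q * P),
      q.-Sylow(Q * P) Q,
      p.-Sylow(Q * P) P,
      Q1 * P <| Q * P
    & Q1 <| Q * P] /\
    [/\ Q :=: [~: Q1, P] * 'N_Q(P),
          [~: Q1, P] <| Q * P,
          [~: Q1, P] :&: 'N_Q(P) = 'C_([~: Q1, P])(P)
        & 'C_([~: Q1, P])(P) \subset 'Phi([~: Q1, P])].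
Proof.
move=> pr_p pr_q _ _ npq pP qQ1 qQ sQ1Q nQ1P nQ1PQ.
have q'P : q^'.-group P.
  by apply: (sub_pgroup _ (idP pP)) => r; rewrite !inE => /eqP->.
have p'Q : p^'.-group Q.
  by apply: (sub_pgroup _ (idP qQ)) => r; rewrite !inE => /eqP->; rewrite eq_sym.
have p'Q1 : p^'.-group Q1 by apply: pgroupS p'Q.
have coQP : coprime #|Q| #|P| := pnat_coprime qQ q'P.
have coQ1P : coprime #|Q1| #|P| := pnat_coprime qQ1 q'P.
have gsQ1P : group_set (Q1 * P).
  by apply/comm_group_setP; symmetry; apply: normC.
pose Q1P := Group gsQ1P.
have gsQP : group_set (Q * P).
  have -> : Q * P = Q * Q1P by rewrite /= mulgA (mulGSid sQ1Q).
  by apply/comm_group_setP; apply: normC.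
pose QP := Group gsQP.
have [hQ _] := coprime_mulpG_Hall (G := QP) (erefl _) qQ q'P.
have [_ hP] := coprime_mulGp_Hall (G := QP) (erefl _) p'Q pP.
have [hQ1 _] := coprime_mulpG_Hall (G := Q1P) (erefl _) qQ1 q'P.
have [_ hP1] := coprime_mulGp_Hall (G := Q1P) (erefl _) p'Q1 pP.
have sQQP : Q \subset QP by apply: mulG_subl.
have sPQP : P \subset QP by apply: mulG_subr.
have nsQ1PQP : Q1P <| QP.
  rewrite /normal mulG_subG (subset_trans sQ1Q sQQP) sPQP /=.
  by rewrite mul_subG // (subset_trans _ (normG Q1P)) // mulG_subr.
have nsQ1Q1P : Q1 <| Q1P.
  by rewrite /normal mulG_subl /= mul_subG ?normG.
have nsQ1QP : Q1 <| QP.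
  rewrite -(normal_Hall_pcore hQ1 nsQ1Q1P).
  exact: char_normal_trans (pcore_char _ _) nsQ1PQP.
split; first by split.
have F := Frattini_arg nsQ1PQP hP1.
have eN : 'N_QP(P) = 'N_Q(P) * P.
  by rewrite /= [LHS]setIC -group_modr ?normG // setIC.
have sXQ : Q1 * 'N_Q(P) \subset Q by rewrite mul_subG ?subsetIl.
have eQ1 : Q = Q1 * 'N_Q(P) :> {set gT}.
  have eQP : Q1 * 'N_Q(P) * P = Q * P.
    rewrite -[RHS]/(gval QP) -F eN /= -!mulgA; congr (_ * _).
    by rewrite mulgA (normC (subsetIr Q _)) -(normC (subsetIr Q _)) -mulgA mulGid.
  rewrite -[LHS](setIidPr sQQP) /= -eQP -group_modl //.
  by rewrite [P :&: Q]setIC (coprime_TIg coQP) mulg1.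
have solQ1 : solvable Q1 := pgroup_sol qQ1.
have defQ1 := cent_prod nQ1P coQ1P solQ1.
have eQ : Q :=: [~: Q1, P] * 'N_Q(P).
  rewrite {1}eQ1 -{1}defQ1 -mulgA mulSGid //.
  by rewrite setISS ?cent_sub.
have sKQ1 : [~: Q1, P] \subset Q1 by rewrite commg_subl.
have nQ1Q : Q \subset 'N(Q1) := subset_trans sQQP (normal_norm nsQ1QP).
have nKQ : Q \subset 'N([~: Q1, P]).
  rewrite {1}eQ mul_subG ?normG //.
  by apply: normsR; [apply: subset_trans (subsetIl _ _) nQ1Q | apply: subsetIr].
split=> //.
- rewrite /normal (subset_trans sKQ1 (subset_trans sQ1Q sQQP)) /=.
  by rewrite mul_subG // commg_normr.
- apply/eqP; rewrite eqEsubset andbC subsetI subsetIl /=.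
  rewrite setISS ?cent_sub ?(subset_trans sKQ1 sQ1Q) //=.
  apply/subsetP=> x /setIP[Kx /setIP[_ Nx]]; rewrite inE Kx /=.
  have : x \in 'N_Q1(P) by rewrite inE (subsetP sKQ1) ?Nx.
  by rewrite coprime_norm_cent // => /setIP[].
- apply: (cent_Phi (p := q)).
  + exact: pgroupS qQ1.
  + exact: commg_normr.
  + exact: coprimeSg coQ1P.
  + exact: comm_id.
Qed.
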